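(* There is an absolute constant $A \geq 1$ such that the following holds. Let $\mathbb{V} = \{(ay+b,y,t) : (y,t) \in \mathbb{R}^{2}\}$ with $a,b \in \mathbb{R}$ be a vertical plane, and define $\pi_{\mathbb{V}} \colon \mathbb{H} \to \mathbb{W}$ by $\pi_{\mathbb{V}}(x,y,t) = (y, t + \tfrac{1}{2}xy - \tfrac{1}{2}ay^{2} - by)$. Then $\pi_{\mathbb{V}}$ maps horizontal lines contained in $\mathbb{V}$ onto horizontal lines in $\mathbb{W}$, and $\pi_{\mathbb{V}}|_{\mathbb{V}} \colon (\mathbb{V},d) \to (\mathbb{W},d_{\mathrm{par}})$ is $A(1+|a|)$-bilipschitz.
   Context: $\mathbb{H}$ is $\mathbb{R}^{3}$ with group law $(x_{1},y_{1},t_{1}) \cdot (x_{2},y_{2},t_{2}) = (x_{1}+x_{2},y_{1}+y_{2},t_{1}+t_{2}+\tfrac{1}{2}(x_{1}y_{2}-x_{2}y_{1}))$ and metric $d(p,q) = \|q^{-1}\cdot p\|$ with $\|(x,y,t)\| = \max\{\sqrt{x^{2}+y^{2}},\sqrt{|t|}\}$. A horizontal line in $\mathbb{H}$ is a set $p \cdot \{(sa',sb',0) : s \in \mathbb{R}\}$ with $(a',b') \neq 0$. $\mathbb{W}$ is $\mathbb{R}^{2}$ with $d_{\mathrm{par}}((y,t),(\xi,\tau)) = \max\{|y-\xi|,|t-\tau|^{1/2}\}$; horizontal lines in $\mathbb{W}$ are the sets $\mathbb{R} \times \{t\}$. *)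

(* Defs.v *)
From Stdlib Require Import Reals.
Open Scope R_scope.

Definition Hpt : Type := (R * R * R)%type.

Definition hmul (p q : Hpt) : Hpt :=
  let '(x1, y1, t1) := p in
  let '(x2, y2, t2) := q in
  (x1 + x2, y1 + y2, t1 + t2 + / 2 * (x1 * y2 - x2 * y1)).

Definition hinv (p : Hpt) : Hpt :=
  let '(x, y, t) := p in (- x, - y, - t).

Definition hnorm (p : Hpt) : R :=
  let '(x, y, t) := p in Rmax (sqrt (x ^ 2 + y ^ 2)) (sqrt (Rabs t)).

Definition hdist (p q : Hpt) : R := hnorm (hmul (hinv q) p).

Definition dpar (u v : R * R) : R :=
  let '(y, t) := u in
  let '(xi, tau) := v in
  Rmax (Rabs (y - xi)) (sqrt (Rabs (t - tau))).

Definition horizontal_line_H (L : Hpt -> Prop) : Prop :=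
  exists (p : Hpt) (a' b' : R), (a' <> 0 \/ b' <> 0) /\
    forall q, L q <-> exists s : R, q = hmul p (s * a', s * b', 0).

Definition horizontal_line_W (L : R * R -> Prop) : Prop :=
  exists t : R, forall u, L u <-> snd u = t.

Definition vplane (a b : R) (p : Hpt) : Prop :=
  exists y t : R, p = (a * y + b, y, t).

Definition piV (a b : R) (p : Hpt) : R * R :=
  let '(x, y, t) := p in
  (y, t + / 2 * x * y - / 2 * a * y ^ 2 - b * y).

(* Main.v *)
Require Import Defs.
From Stdlib Require Import Reals Lra.
Open Scope R_scope.

Lemma sq_bounds (a u : R) :
  Rabs u <= sqrt ((a*u)^2 + u^2) /\ sqrt ((a*u)^2 + u^2) <= (1 + Rabs a) * Rabs u.
Proof.
  split.
  - rewrite <- sqrt_Rsqr_abs. apply sqrt_le_1_alt. unfold Rsqr.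
    assert (0 <= (a*u)^2) by (apply pow2_ge_0). nra.
  - assert (H0 : 0 <= (1 + Rabs a) * Rabs u).
    { apply Rmult_le_pos; [pose proof (Rabs_pos a); lra | apply Rabs_pos]. }
    rewrite <- (sqrt_pow2 _ H0). apply sqrt_le_1_alt.
    assert (Ha : a^2 = Rabs a ^2) by (rewrite pow2_abs; reflexivity).
    assert (Hu : u^2 = Rabs u ^2) by (rewrite pow2_abs; reflexivity).
    replace ((a*u)^2) with (a^2 * u^2) by ring. rewrite Ha, Hu.
    pose proof (Rabs_pos a). pose proof (Rabs_pos u).
    assert (0 <= Rabs a * Rabs u * Rabs u) by (repeat apply Rmult_le_pos; auto).
    nra.
Qed.

Lemma key (a u T : R) :
  Rmax (sqrt ((a*u)^2 + u^2)) (sqrt (Rabs T)) / (1 * (1 + Rabs a))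
    <= Rmax (Rabs u) (sqrt (Rabs T)) /\
  Rmax (Rabs u) (sqrt (Rabs T))
    <= 1 * (1 + Rabs a) * Rmax (sqrt ((a*u)^2 + u^2)) (sqrt (Rabs T)).
Proof.
  destruct (sq_bounds a u) as [H1 H2].
  pose proof (Rabs_pos a). pose proof (Rabs_pos u).
  pose proof (sqrt_pos (Rabs T)).
  pose proof (Rmax_l (Rabs u) (sqrt (Rabs T))).
  pose proof (Rmax_r (Rabs u) (sqrt (Rabs T))).
  pose proof (Rmax_l (sqrt ((a*u)^2 + u^2)) (sqrt (Rabs T))).
  pose proof (Rmax_r (sqrt ((a*u)^2 + u^2)) (sqrt (Rabs T))).
  set (M := Rmax (Rabs u) (sqrt (Rabs T))) in *.
  set (N := Rmax (sqrt ((a*u)^2 + u^2)) (sqrt (Rabs T))) in *.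
  split.
  - unfold Rdiv. apply Rmult_le_reg_r with (1 * (1 + Rabs a)). lra.
    rewrite Rmult_assoc, Rinv_l by lra. rewrite Rmult_1_r.
    unfold N. apply Rmax_lub.
    + assert (Rabs a * Rabs u <= Rabs a * M) by (apply Rmult_le_compat_l; lra). nra.
    + assert (0 <= Rabs a * M) by (apply Rmult_le_pos; lra). nra.
  - unfold M. apply Rmax_lub.
    + assert (Rabs a * Rabs u <= Rabs a * N) by (apply Rmult_le_compat_l; lra). nra.
    + assert (0 <= Rabs a * N) by (apply Rmult_le_pos; lra). nra.
Qed.

Theorem lemma4p13 :
  exists A : R, 1 <= A /\
  forall a b : R,
    (forall L : Hpt -> Prop,
        horizontal_line_H L ->
        (forall p, L p -> vplane a b p) ->
        horizontal_line_W (fun u => exists p, L p /\ piV a b p = u)) /\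
    (forall p q : Hpt, vplane a b p -> vplane a b q ->
        hdist p q / (A * (1 + Rabs a)) <= dpar (piV a b p) (piV a b q) /\
        dpar (piV a b p) (piV a b q) <= A * (1 + Rabs a) * hdist p q).
Proof.
  exists 1. split; [lra|]. intros a b. split.
  - intros L [[[x0 y0] t0] [a' [b' [Hab HL]]]] HV.
    assert (E : forall s, vplane a b (hmul (x0,y0,t0) (s*a', s*b', 0))).
    { intro s. apply HV. apply HL. eauto. }
    destruct (E 0) as [y1 [t1 E0]]. destruct (E 1) as [y2 [t2 E1]].
    simpl in E0, E1. injection E0; intros; injection E1; intros.
    assert (Hx0 : x0 = a*y0 + b) by nra.
    assert (Ha' : a' = a*b') by nra.
    assert (Hb' : b' <> 0) by (intro; subst; destruct Hab; lra).
    exists (t0 - b*y0/2). intros [y t]. simpl. split.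
    + intros [p [Lp Pp]]. apply HL in Lp. destruct Lp as [s ->].
      simpl in Pp. injection Pp; intros; subst. nra.
    + intros ->. exists (hmul (x0,y0,t0) ((y-y0)/b' * a', (y-y0)/b'*b', 0)).
      split. apply HL. eauto.
      simpl. subst. f_equal; field; auto.
  - intros p q [y1 [t1 ->]] [y2 [t2 ->]].
    unfold hdist, dpar, piV, hinv, hmul, hnorm.
    destruct (key a (y1 - y2) ((t1 - b*y1/2) - (t2 - b*y2/2))) as [K1 K2].
    replace (- (a * y2 + b) + (a * y1 + b)) with (a * (y1 - y2)) by ring.
    replace (- y2 + y1) with (y1 - y2) by ring.
    replace (- t2 + t1 + / 2 * (- (a * y2 + b) * y1 - (a * y1 + b) * - y2))
      with ((t1 - b*y1/2) - (t2 - b*y2/2)) by field.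
    replace (t1 + / 2 * (a * y1 + b) * y1 - / 2 * a * y1 ^ 2 - b * y1 -
      (t2 + / 2 * (a * y2 + b) * y2 - / 2 * a * y2 ^ 2 - b * y2))
      with ((t1 - b*y1/2) - (t2 - b*y2/2)) by field.
    split; assumption.
Qed.
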